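(* Each of the following theories (in a language with two binary relation symbols $R$ and $S$, where $S$ is required to be coarser than $R$, i.e. $R\subseteq S$) has superSAP with respect to both relations (simultaneously): (1) $R$ and $S$ are both partial orders; (2) $R$ is a partial order and $S$ is a preorder (reflexive transitive); (3) $R$ is a partial order and $S$ is a tolerance (reflexive symmetric); (4) $R$ is a strict partial order (antireflexive transitive) and $S$ is a graph relation (symmetric antireflexive); (5) $R$ is a directed graph relation (antireflexive) and $S$ is a strict order relation (antireflexive transitive). Moreover, SAP is maintained if families of unary operations which preserve both relations ($x\,R\,y\Rightarrow h(x)\,R\,h(y)$ and $x\,S\,y\Rightarrow h(x)\,S\,h(y)$) or reverse both relations ($x\,R\,y\Rightarrow h(y)\,R\,h(x)$ and $x\,S\,y\Rightarrow h(y)\,S\,h(x)$) are added.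
   Context: A triple to be amalgamated is $\mathbf{A},\mathbf{B},\mathbf{C}$ models with $\mathbf{C}\subseteq\mathbf{A}$, $\mathbf{C}\subseteq\mathbf{B}$, $C=A\cap B$. SAP: there is a model $\mathbf{D}$ with $\mathbf{A},\mathbf{B}\subseteq\mathbf{D}$. SuperSAP with respect to a relation $T$: a $\mathbf{D}$ witnessing SAP such that for $a\in A\setminus B$, $b\in B\setminus A$, $a\,T_{\mathbf{D}}\,b$ implies $a\,T_{\mathbf{A}}\,c\,T_{\mathbf{B}}\,b$ for some $c\in C$, and $b\,T_{\mathbf{D}}\,a$ implies $b\,T_{\mathbf{B}}\,c\,T_{\mathbf{A}}\,a$ for some $c\in C$. *)

(* Defs.v *)
(* Structures in the language {R, S} plus a family of unary
   operation symbols indexed by I, all living inside an ambient type T, so that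
   "C ⊆ A" and "C = A ∩ B" have their literal set-theoretic meaning. *)

Set Implicit Arguments.

Record str (T I : Type) := Str {
  car : T -> Prop;
  rR  : T -> T -> Prop;          (* interpretation of R (meaningful on car) *)
  rS  : T -> T -> Prop;          (* interpretation of S (meaningful on car) *)
  op  : I -> T -> T
}.

Section Defs.
Variables T I : Type.

Definition refl_on (P : T -> Prop) (r : T -> T -> Prop) :=
  forall x, P x -> r x x.
Definition irrefl_on (P : T -> Prop) (r : T -> T -> Prop) :=
  forall x, P x -> ~ r x x.
Definition sym_on (P : T -> Prop) (r : T -> T -> Prop) :=
  forall x y, P x -> P y -> r x y -> r y x.
Definition antisym_on (P : T -> Prop) (r : T -> T -> Prop) :=
  forall x y, P x -> P y -> r x y -> r y x -> x = y.
Definition trans_on (P : T -> Prop) (r : T -> T -> Prop) :=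
  forall x y z, P x -> P y -> P z -> r x y -> r y z -> r x z.

Definition partial_order_on P r := refl_on P r /\ antisym_on P r /\ trans_on P r.
Definition preorder_on P r := refl_on P r /\ trans_on P r.
Definition tolerance_on P r := refl_on P r /\ sym_on P r.
Definition strict_order_on P r := irrefl_on P r /\ trans_on P r.
Definition graph_on P r := sym_on P r /\ irrefl_on P r.
Definition digraph_on P r := irrefl_on P r.

Inductive theory := Th1 | Th2 | Th3 | Th4 | Th5.

Definition th_axioms (th : theory) (P : T -> Prop) (R S : T -> T -> Prop) :=
  match th with
  | Th1 => partial_order_on P R /\ partial_order_on P S
  | Th2 => partial_order_on P R /\ preorder_on P S
  | Th3 => partial_order_on P R /\ tolerance_on P S
  | Th4 => strict_order_on P R /\ graph_on P S
  | Th5 => digraph_on P R /\ strict_order_on P S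
  end.

Definition model (th : theory) (dir : I -> bool) (M : str T I) : Prop :=
  (forall i x, car M x -> car M (op M i x)) /\
  th_axioms th (car M) (rR M) (rS M) /\
  (forall x y, car M x -> car M y -> rR M x y -> rS M x y) /\
  (forall i x y, car M x -> car M y ->
     if dir i then
       (rR M x y -> rR M (op M i x) (op M i y)) /\
       (rS M x y -> rS M (op M i x) (op M i y))
     else
       (rR M x y -> rR M (op M i y) (op M i x)) /\
       (rS M x y -> rS M (op M i y) (op M i x))).

Definition substr (C A : str T I) : Prop :=
  (forall x, car C x -> car A x) /\
  (forall x y, car C x -> car C y -> (rR C x y <-> rR A x y)) /\
  (forall x y, car C x -> car C y -> (rS C x y <-> rS A x y)) /\
  (forall i x, car C x -> op C i x = op A i x).

Definition triple (K : str T I -> Prop) (A B C : str T I) : Prop :=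
  K A /\ K B /\ K C /\ substr C A /\ substr C B /\
  (forall x, car C x <-> (car A x /\ car B x)).

Definition SAP (K : str T I -> Prop) : Prop :=
  forall A B C, triple K A B C ->
    exists D, K D /\ substr A D /\ substr B D.

Definition super_cond (rel : str T I -> T -> T -> Prop) (A B C D : str T I) :=
  forall a b, car A a -> ~ car B a -> car B b -> ~ car A b ->
    (rel D a b -> exists c, car C c /\ rel A a c /\ rel B c b) /\
    (rel D b a -> exists c, car C c /\ rel B b c /\ rel A c a).

Definition superSAP_RS (K : str T I -> Prop) : Prop :=
  forall A B C, triple K A B C ->
    exists D, K D /\ substr A D /\ substr B D /\
      super_cond (@rR T I) A B C D /\ super_cond (@rS T I) A B C D.

End Defs.

Definition no_ops : Empty_set -> bool := fun e => match e with end.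

(* Main.v *)
Require Import Defs.
From Stdlib Require Import ClassicalEpsilon.
Ltac dall := repeat match goal with
  | H : _ /\ _ |- _ => destruct H
  | H : _ \/ _ |- _ => destruct H
  | H : exists _, _ |- _ => destruct H end.

Ltac sat1 := match goal with
  | H : ?P ?x, H' : ~ ?P ?x |- _ => exfalso; exact (H' H)
  | Hi : irrefl_on ?P ?r, H : ?r ?x ?x, Hx : ?P ?x |- _ => exfalso; exact (Hi x Hx H)
  | HC : forall a, ?PC a <-> ?PA a /\ ?PB a, Hx : ?PA ?x, Hy : ?PB ?x |- _ =>
      lazymatch goal with _ : PC x |- _ => fail | _ => pose proof (proj2 (HC x) (conj Hx Hy)) end
  | HC : forall a, ?PC a <-> ?PA a /\ ?PB a, Hx : ?PC ?x |- _ =>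
      lazymatch goal with _ : PA x |- _ => fail | _ => pose proof (proj1 (proj1 (HC x) Hx)) end
  | HC : forall a, ?PC a <-> ?PA a /\ ?PB a, Hx : ?PC ?x |- _ =>
      lazymatch goal with _ : PB x |- _ => fail | _ => pose proof (proj2 (proj1 (HC x) Hx)) end
  | Hg : forall a b, ?PC a -> ?PC b -> (?r a b <-> ?r' a b), H : ?r ?x ?y, Hx : ?PC ?x, Hy : ?PC ?y |- _ =>
      lazymatch goal with _ : r' x y |- _ => fail | _ => pose proof (proj1 (Hg x y Hx Hy) H) end
  | Hg : forall a b, ?PC a -> ?PC b -> (?r a b <-> ?r' a b), H : ?r' ?x ?y, Hx : ?PC ?x, Hy : ?PC ?y |- _ =>
      lazymatch goal with _ : r x y |- _ => fail | _ => pose proof (proj2 (Hg x y Hx Hy) H) end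
  | Hs : sym_on ?P ?r, H : ?r ?x ?y |- _ =>
      lazymatch goal with _ : r y x |- _ => fail | _ => assert (r y x) by (apply Hs; assumption) end
  | Hs : forall a b, ?P a -> ?P b -> ?r a b -> ?s a b, H : ?r ?x ?y |- _ =>
      lazymatch goal with _ : s x y |- _ => fail | _ => assert (s x y) by (apply Hs; assumption) end
  | Ht : trans_on ?P ?r, H1 : ?r ?x ?y, H2 : ?r ?y ?z |- _ =>
      lazymatch goal with _ : r x z |- _ => fail | _ => assert (r x z) by (apply (Ht x y z); assumption) end
  | Ha : antisym_on ?P ?r, H1 : ?r ?x ?y, H2 : ?r ?y ?x |- _ =>
      is_var x; is_var y; lazymatch x with y => fail | _ => idtac end;
      assert (x = y) by (apply Ha; assumption); subst
  end.
Ltac sat := repeat sat1.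
Ltac fin := first [ reflexivity | assumption | solve [tauto] | split; fin | left; fin | right; fin
  | match goal with H : _ ?c |- exists _, _ => exists c; fin end ].
Ltac grind := intros; dall; sat; fin.


Set Implicit Arguments.
Section Amal.
Variables (T : Type) (PA PB PC : T -> Prop) (rA rB : T -> T -> Prop).
Hypothesis HC : forall a, PC a <-> PA a /\ PB a.
Hypothesis Hg : forall a b, PC a -> PC b -> (rA a b <-> rB a b).

Definition U x y :=
 (PA x /\ PA y /\ rA x y) \/ (PB x /\ PB y /\ rB x y) \/
 (exists c, PC c /\ PA x /\ PB y /\ rA x c /\ rB c y) \/
 (exists c, PC c /\ PB x /\ PA y /\ rB x c /\ rA c y).
Definition V x y := (PA x /\ PA y /\ rA x y) \/ (PB x /\ PB y /\ rB x y).
Definition PD x := PA x \/ PB x.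

Lemma U_trans : trans_on PA rA -> trans_on PB rB -> trans_on PD U.
Proof. intros t1 t2 x y z _ _ _. unfold U. grind. Qed.
Lemma U_antisym : trans_on PA rA -> trans_on PB rB -> antisym_on PA rA -> antisym_on PB rB -> antisym_on PD U.
Proof. intros t1 t2 a1 a2 x y _ _. unfold U. grind. Qed.
Lemma U_refl : refl_on PA rA -> refl_on PB rB -> refl_on PD U.
Proof. intros t1 t2 x [H|H]; unfold U; [left|right;left]; auto. Qed.
Lemma U_irrefl : trans_on PA rA -> trans_on PB rB -> irrefl_on PA rA -> irrefl_on PB rB -> irrefl_on PD U.
Proof. intros t1 t2 a1 a2 x _ H. unfold U in H. dall; sat. Qed.
Lemma U_restrA : trans_on PA rA -> forall x y, PA x -> PA y -> (rA x y <-> U x y).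
Proof. intros t1 x y Hx Hy; split; [unfold U; tauto|]. unfold U. grind. Qed.
Lemma U_restrB : trans_on PB rB -> forall x y, PB x -> PB y -> (rB x y <-> U x y).
Proof. intros t1 x y Hx Hy; split; [unfold U; tauto|]. unfold U. grind. Qed.
Lemma U_super : forall a b, PA a -> ~PB a -> PB b -> ~PA b ->
  (U a b -> exists c, PC c /\ rA a c /\ rB c b) /\ (U b a -> exists c, PC c /\ rB b c /\ rA c a).
Proof. intros a b H1 H2 H3 H4; unfold U; split; grind. Qed.
Lemma V_irrefl : irrefl_on PA rA -> irrefl_on PB rB -> irrefl_on PD V.
Proof. intros a1 a2 x _ H. unfold V in H. dall; sat. Qed.
Lemma V_restrA : forall x y, PA x -> PA y -> (rA x y <-> V x y).
Proof. intros x y Hx Hy; split; [unfold V; tauto|]. unfold V. grind. Qed.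
Lemma V_restrB : forall x y, PB x -> PB y -> (rB x y <-> V x y).
Proof. intros x y Hx Hy; split; [unfold V; tauto|]. unfold V. grind. Qed.
Lemma V_super : forall a b, PA a -> ~PB a -> PB b -> ~PA b ->
  (V a b -> exists c, PC c /\ rA a c /\ rB c b) /\ (V b a -> exists c, PC c /\ rB b c /\ rA c a).
Proof. intros a b H1 H2 H3 H4; unfold V; split; grind. Qed.
Lemma V_U x y : V x y -> U x y.
Proof. unfold V, U; tauto. Qed.

Section Hom.
Variable h : T -> T.
Hypothesis hA : forall x, PA x -> PA (h x).
Hypothesis hB : forall x, PB x -> PB (h x).
Lemma U_hom : (forall x y, PA x -> PA y -> rA x y -> rA (h x) (h y)) ->
  (forall x y, PB x -> PB y -> rB x y -> rB (h x) (h y)) -> forall x y, U x y -> U (h x) (h y).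
Proof. intros HA HB x y H; unfold U in *.
  destruct H as [(?&?&?)|[(?&?&?)|[(c&Hc&?&?&?&?)|(c&Hc&?&?&?&?)]]];
  [left; auto | right; left; auto | right; right; left | right; right; right];
  try (apply HC in Hc; destruct Hc; exists (h c); repeat split; auto; apply HC; auto).
Qed.
Lemma U_anti : (forall x y, PA x -> PA y -> rA x y -> rA (h y) (h x)) ->
  (forall x y, PB x -> PB y -> rB x y -> rB (h y) (h x)) -> forall x y, U x y -> U (h y) (h x).
Proof. intros HA HB x y H; unfold U in *.
  destruct H as [(?&?&?)|[(?&?&?)|[(c&Hc&?&?&?&?)|(c&Hc&?&?&?&?)]]];
  [left; auto | right; left; auto | right; right; right | right; right; left];
  try (apply HC in Hc; destruct Hc; exists (h c); repeat split; auto; apply HC; auto).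
Qed.
Lemma V_hom : (forall x y, PA x -> PA y -> rA x y -> rA (h x) (h y)) ->
  (forall x y, PB x -> PB y -> rB x y -> rB (h x) (h y)) -> forall x y, V x y -> V (h x) (h y).
Proof. unfold V; intros HA HB x y [(?&?&?)|(?&?&?)]; [left|right]; auto. Qed.
Lemma V_anti : (forall x y, PA x -> PA y -> rA x y -> rA (h y) (h x)) ->
  (forall x y, PB x -> PB y -> rB x y -> rB (h y) (h x)) -> forall x y, V x y -> V (h y) (h x).
Proof. unfold V; intros HA HB x y [(?&?&?)|(?&?&?)]; [left|right]; auto. Qed.
End Hom.
End Amal.

Section Mono.
Variables (T : Type) (PA PB PC : T -> Prop) (rA rB sA sB : T -> T -> Prop).
Lemma U_mono : (forall x y, PA x -> PA y -> rA x y -> sA x y) ->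
  (forall x y, PB x -> PB y -> rB x y -> sB x y) ->
  (forall c, PC c -> PA c /\ PB c) ->
  forall x y, U PA PB PC rA rB x y -> U PA PB PC sA sB x y.
Proof. intros HA HB HC x y H; unfold U in *.
  destruct H as [(?&?&?)|[(?&?&?)|[(c&Hc&?&?&?&?)|(c&Hc&?&?&?&?)]]];
  [left; auto | right; left; auto | right; right; left | right; right; right];
  destruct (HC c Hc); exists c; repeat split; auto.
Qed.
End Mono.

Definition W T (PA PB PC : T -> Prop) (sA sB rA rB : T -> T -> Prop) x y :=
  (PA x /\ PA y /\ sA x y) \/ (PB x /\ PB y /\ sB x y) \/
  U PA PB PC rA rB x y \/ U PA PB PC rA rB y x.

Section WS.
Variables (T : Type) (PA PB PC : T -> Prop) (rA rB sA sB : T -> T -> Prop).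
Hypothesis HC : forall a, PC a <-> PA a /\ PB a.
Hypothesis Hg : forall a b, PC a -> PC b -> (rA a b <-> rB a b).
Hypothesis Hgs : forall a b, PC a -> PC b -> (sA a b <-> sB a b).
Notation W' := (W PA PB PC sA sB rA rB).
Notation U' := (U PA PB PC rA rB).

Lemma W_refl : refl_on PA sA -> refl_on PB sB -> refl_on (PD PA PB) W'.
Proof. intros t1 t2 x [H|H]; unfold W; [left|right;left]; auto. Qed.
Lemma W_sym : sym_on PA sA -> sym_on PB sB -> sym_on (PD PA PB) W'.
Proof. intros s1 s2 x y _ _ H; unfold W in *.
  destruct H as [(?&?&?)|[(?&?&?)|[?|?]]]; [left|right;left|right;right;right|right;right;left]; auto. Qed.
Lemma W_irrefl : trans_on PA rA -> trans_on PB rB -> irrefl_on PA rA -> irrefl_on PB rB ->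
  irrefl_on PA sA -> irrefl_on PB sB -> irrefl_on (PD PA PB) W'.
Proof. intros t1 t2 i1 i2 j1 j2 x Hx H; unfold W in H.
  destruct H as [(?&?&?)|[(?&?&?)|[?|?]]].
  - eapply j1; eauto. - eapply j2; eauto.
  - eapply (U_irrefl HC Hg); eauto. - eapply (U_irrefl HC Hg); eauto. Qed.

Hypothesis incA : forall x y, PA x -> PA y -> rA x y -> sA x y.
Hypothesis incB : forall x y, PB x -> PB y -> rB x y -> sB x y.

Lemma W_restrA : trans_on PA rA -> sym_on PA sA -> forall x y, PA x -> PA y -> (sA x y <-> W' x y).
Proof. intros t1 s1 x y Hx Hy; split; [unfold W; tauto|]. intro H; unfold W in H.
  destruct H as [(?&?&?)|[(?&?&?)|[H|H]]].
  - auto.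
  - apply Hgs; auto; apply HC; auto.
  - apply incA; auto. apply (U_restrA PB PC rB HC Hg t1); auto.
  - apply s1; auto. apply incA; auto. apply (U_restrA PB PC rB HC Hg t1); auto. Qed.
Lemma W_restrB : trans_on PB rB -> sym_on PB sB -> forall x y, PB x -> PB y -> (sB x y <-> W' x y).
Proof. intros t1 s1 x y Hx Hy; split; [unfold W; tauto|]. intro H; unfold W in H.
  destruct H as [(?&?&?)|[(?&?&?)|[H|H]]].
  - apply Hgs; auto; apply HC; auto.
  - auto.
  - apply incB; auto. apply (U_restrB PA PC rA HC Hg t1); auto.
  - apply s1; auto. apply incB; auto. apply (U_restrB PA PC rA HC Hg t1); auto. Qed.
Lemma W_super : sym_on PA sA -> sym_on PB sB -> forall a b, PA a -> ~PB a -> PB b -> ~PA b ->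
  (W' a b -> exists c, PC c /\ sA a c /\ sB c b) /\ (W' b a -> exists c, PC c /\ sB b c /\ sA c a).
Proof. intros s1 s2 a b H1 H2 H3 H4.
  destruct (U_super PA PB PC rA rB HC a b H1 H2 H3 H4) as [U1 U2].
  split; intro H; unfold W in H; destruct H as [(?&?&?)|[(?&?&?)|[H|H]]]; try tauto.
  all: first [destruct (U1 H) as (c&Hc&?&?) | destruct (U2 H) as (c&Hc&?&?)];
    destruct (proj1 (HC c) Hc); exists c; repeat split; auto;
    first [apply s1; auto | apply s2; auto].
Qed.
Lemma U_W x y : U' x y -> W' x y.
Proof. unfold W; tauto. Qed.

Section Hom.
Variable h : T -> T.
Hypothesis hA : forall x, PA x -> PA (h x).
Hypothesis hB : forall x, PB x -> PB (h x).
Lemma W_hom : (forall x y, PA x -> PA y -> rA x y -> rA (h x) (h y)) ->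
  (forall x y, PB x -> PB y -> rB x y -> rB (h x) (h y)) ->
  (forall x y, PA x -> PA y -> sA x y -> sA (h x) (h y)) ->
  (forall x y, PB x -> PB y -> sB x y -> sB (h x) (h y)) ->
  forall x y, W' x y -> W' (h x) (h y).
Proof. intros HA HB SA SB x y H; unfold W in *.
  destruct H as [(?&?&?)|[(?&?&?)|[H|H]]];
  [left; auto | right; left; auto | right; right; left | right; right; right];
  eapply (U_hom HC); eauto. Qed.
Lemma W_anti : (forall x y, PA x -> PA y -> rA x y -> rA (h y) (h x)) ->
  (forall x y, PB x -> PB y -> rB x y -> rB (h y) (h x)) ->
  (forall x y, PA x -> PA y -> sA x y -> sA (h y) (h x)) ->
  (forall x y, PB x -> PB y -> sB x y -> sB (h y) (h x)) ->
  forall x y, W' x y -> W' (h y) (h x).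
Proof. intros HA HB SA SB x y H; unfold W in *.
  destruct H as [(?&?&?)|[(?&?&?)|[H|H]]];
  [left; auto | right; left; auto | right; right; left | right; right; right];
  eapply (U_anti HC); eauto. Qed.
End Hom.
End WS.
Set Implicit Arguments.

Definition mkD T I (A B : str T I) (rd sd : T -> T -> Prop) : str T I :=
  Str (fun x => car A x \/ car B x) rd sd
    (fun i x => if excluded_middle_informative (car A x) then op A i x else op B i x).

Lemma build_gen T I th (dir : I -> bool) (A B C : str T I) rd sd :
  triple (model th dir) A B C ->
  th_axioms th (PD (car A) (car B)) rd sd ->
  (forall x y, PD (car A) (car B) x -> PD (car A) (car B) y -> rd x y -> sd x y) ->
  (forall x y, car A x -> car A y -> (rR A x y <-> rd x y)) ->
  (forall x y, car B x -> car B y -> (rR B x y <-> rd x y)) ->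
  (forall x y, car A x -> car A y -> (rS A x y <-> sd x y)) ->
  (forall x y, car B x -> car B y -> (rS B x y <-> sd x y)) ->
  (forall h : T -> T, (forall x, car A x -> car A (h x)) -> (forall x, car B x -> car B (h x)) ->
     (forall x y, car A x -> car A y -> rR A x y -> rR A (h x) (h y)) ->
     (forall x y, car B x -> car B y -> rR B x y -> rR B (h x) (h y)) ->
     (forall x y, car A x -> car A y -> rS A x y -> rS A (h x) (h y)) ->
     (forall x y, car B x -> car B y -> rS B x y -> rS B (h x) (h y)) ->
     forall x y, (rd x y -> rd (h x) (h y)) /\ (sd x y -> sd (h x) (h y))) ->
  (forall h : T -> T, (forall x, car A x -> car A (h x)) -> (forall x, car B x -> car B (h x)) ->
     (forall x y, car A x -> car A y -> rR A x y -> rR A (h y) (h x)) ->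
     (forall x y, car B x -> car B y -> rR B x y -> rR B (h y) (h x)) ->
     (forall x y, car A x -> car A y -> rS A x y -> rS A (h y) (h x)) ->
     (forall x y, car B x -> car B y -> rS B x y -> rS B (h y) (h x)) ->
     forall x y, (rd x y -> rd (h y) (h x)) /\ (sd x y -> sd (h y) (h x))) ->
  model th dir (mkD A B rd sd) /\ substr A (mkD A B rd sd) /\ substr B (mkD A B rd sd).
Proof.
  intros Htr Hax Hinc HrA HrB HsA HsB Hhom Hanti.
  destruct Htr as (MA&MB&MC&(_&_&_&sCA)&(_&_&_&sCB)&HC).
  destruct MA as (cA&_&_&oA). destruct MB as (cB&_&_&oB).
  assert (opDA : forall i x, car A x -> op (mkD A B rd sd) i x = op A i x).
  { intros i x Hx; simpl; destruct (excluded_middle_informative (car A x)); tauto. }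
  assert (opDB : forall i x, car B x -> op (mkD A B rd sd) i x = op B i x).
  { intros i x Hx; simpl; destruct (excluded_middle_informative (car A x)); [|reflexivity].
    assert (Hc : car C x) by (apply HC; auto). rewrite <- (sCA i x Hc), (sCB i x Hc); reflexivity. }
  assert (hA : forall i x, car A x -> car A (op (mkD A B rd sd) i x)).
  { intros i x Hx; rewrite opDA; auto. }
  assert (hB : forall i x, car B x -> car B (op (mkD A B rd sd) i x)).
  { intros i x Hx; rewrite opDB; auto. }
  split; [|split].
  - split; [|split; [exact Hax|split; [exact Hinc|]]].
    + intros i x [Hx|Hx]; [left; apply hA | right; apply hB]; auto.
    + intros i x y Hx Hy. simpl rR; simpl rS.
      destruct (dir i) eqn:E.
      * destruct (Hhom (op (mkD A B rd sd) i) (hA i) (hB i)) with (x := x) (y := y);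
        [ intros u v Hu Hv H; rewrite !opDA by auto; specialize (oA i u v Hu Hv); rewrite E in oA; tauto
        | intros u v Hu Hv H; rewrite !opDB by auto; specialize (oB i u v Hu Hv); rewrite E in oB; tauto
        | intros u v Hu Hv H; rewrite !opDA by auto; specialize (oA i u v Hu Hv); rewrite E in oA; tauto
        | intros u v Hu Hv H; rewrite !opDB by auto; specialize (oB i u v Hu Hv); rewrite E in oB; tauto
        | tauto ].
      * destruct (Hanti (op (mkD A B rd sd) i) (hA i) (hB i)) with (x := x) (y := y);
        [ intros u v Hu Hv H; rewrite !opDA by auto; specialize (oA i u v Hu Hv); rewrite E in oA; tauto
        | intros u v Hu Hv H; rewrite !opDB by auto; specialize (oB i u v Hu Hv); rewrite E in oB; tauto
        | intros u v Hu Hv H; rewrite !opDA by auto; specialize (oA i u v Hu Hv); rewrite E in oA; tauto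
        | intros u v Hu Hv H; rewrite !opDB by auto; specialize (oB i u v Hu Hv); rewrite E in oB; tauto
        | tauto ].
  - split; [simpl; tauto|split; [exact HrA|split; [exact HsA|]]].
    intros i x Hx; symmetry; auto.
  - split; [simpl; tauto|split; [exact HrB|split; [exact HsB|]]].
    intros i x Hx; symmetry; auto.
Qed.

Ltac gen_goals := first
  [ eapply U_refl | eapply U_trans | eapply U_antisym | eapply U_irrefl | eapply V_irrefl
  | eapply W_refl | eapply W_sym | eapply W_irrefl ]; eauto.

Lemma build T I th (dir : I -> bool) (A B C : str T I) :
  triple (model th dir) A B C ->
  exists D, model th dir D /\ substr A D /\ substr B D /\
    super_cond (@rR T I) A B C D /\ super_cond (@rS T I) A B C D.
Proof.
  intros Htr.
  pose proof Htr as (MA&MB&MC&(_&sCA2&sCA3&_)&(_&sCB2&sCB3&_)&HC).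
  assert (HgR : forall a b, car C a -> car C b -> (rR A a b <-> rR B a b)).
  { intros a b Ha Hb; rewrite <- sCA2, <- sCB2 by auto; tauto. }
  assert (HgS : forall a b, car C a -> car C b -> (rS A a b <-> rS B a b)).
  { intros a b Ha Hb; rewrite <- sCA3, <- sCB3 by auto; tauto. }
  assert (HC2 : forall c, car C c -> car A c /\ car B c) by (intros; apply HC; auto).
  destruct MA as (_&axA&incA&_). destruct MB as (_&axB&incB&_).
  destruct th; simpl in axA, axB.
  - destruct axA as ((rA1&aA1&tA1)&(rA2&aA2&tA2)). destruct axB as ((rB1&aB1&tB1)&(rB2&aB2&tB2)).
    set (rd := U (car A) (car B) (car C) (rR A) (rR B)).
    set (sd := U (car A) (car B) (car C) (rS A) (rS B)).
    exists (mkD A B rd sd).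
    destruct (@build_gen T I Th1 dir A B C rd sd Htr) as (?&?&?).
    + simpl; repeat split; gen_goals.
    + intros x y _ _; apply U_mono; auto.
    + eapply U_restrA; eauto.
    + eapply U_restrB; eauto.
    + eapply U_restrA; eauto.
    + eapply U_restrB; eauto.
    + intros h hA hB RA RB SA SB x y; split; eapply U_hom; eauto.
    + intros h hA hB RA RB SA SB x y; split; eapply U_anti; eauto.
    + split; [assumption|split;[assumption|split;[assumption|split]]]; unfold super_cond; intros a b Ha1 Ha2 Ha3 Ha4; simpl; eapply U_super; eauto.
  - destruct axA as ((rA1&aA1&tA1)&(rA2&tA2)). destruct axB as ((rB1&aB1&tB1)&(rB2&tB2)).
    set (rd := U (car A) (car B) (car C) (rR A) (rR B)).
    set (sd := U (car A) (car B) (car C) (rS A) (rS B)).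
    exists (mkD A B rd sd).
    destruct (@build_gen T I Th2 dir A B C rd sd Htr) as (?&?&?).
    + simpl; repeat split; gen_goals.
    + intros x y _ _; apply U_mono; auto.
    + eapply U_restrA; eauto.
    + eapply U_restrB; eauto.
    + eapply U_restrA; eauto.
    + eapply U_restrB; eauto.
    + intros h hA hB RA RB SA SB x y; split; eapply U_hom; eauto.
    + intros h hA hB RA RB SA SB x y; split; eapply U_anti; eauto.
    + split; [assumption|split;[assumption|split;[assumption|split]]]; unfold super_cond; intros a b Ha1 Ha2 Ha3 Ha4; simpl; eapply U_super; eauto.
  - destruct axA as ((rA1&aA1&tA1)&(rA2&sA2)). destruct axB as ((rB1&aB1&tB1)&(rB2&sB2)).
    set (rd := U (car A) (car B) (car C) (rR A) (rR B)).
    set (sd := W (car A) (car B) (car C) (rS A) (rS B) (rR A) (rR B)).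
    exists (mkD A B rd sd).
    destruct (@build_gen T I Th3 dir A B C rd sd Htr) as (?&?&?).
    + simpl; repeat split; gen_goals.
    + intros x y _ _; apply U_W.
    + eapply U_restrA; eauto.
    + eapply U_restrB; eauto.
    + eapply W_restrA; eauto.
    + eapply W_restrB; eauto.
    + intros h hA hB RA RB SA SB x y; split; [eapply U_hom|eapply W_hom]; eauto.
    + intros h hA hB RA RB SA SB x y; split; [eapply U_anti|eapply W_anti]; eauto.
    + split; [assumption|split;[assumption|split;[assumption|split]]]; unfold super_cond; intros a b Ha1 Ha2 Ha3 Ha4; simpl; [eapply U_super|eapply W_super]; eauto.
  - destruct axA as ((iA1&tA1)&(sA2&iA2)). destruct axB as ((iB1&tB1)&(sB2&iB2)).
    set (rd := U (car A) (car B) (car C) (rR A) (rR B)).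
    set (sd := W (car A) (car B) (car C) (rS A) (rS B) (rR A) (rR B)).
    exists (mkD A B rd sd).
    destruct (@build_gen T I Th4 dir A B C rd sd Htr) as (?&?&?).
    + simpl; repeat split; gen_goals.
    + intros x y _ _; apply U_W.
    + eapply U_restrA; eauto.
    + eapply U_restrB; eauto.
    + eapply W_restrA; eauto.
    + eapply W_restrB; eauto.
    + intros h hA hB RA RB SA SB x y; split; [eapply U_hom|eapply W_hom]; eauto.
    + intros h hA hB RA RB SA SB x y; split; [eapply U_anti|eapply W_anti]; eauto.
    + split; [assumption|split;[assumption|split;[assumption|split]]]; unfold super_cond; intros a b Ha1 Ha2 Ha3 Ha4; simpl; [eapply U_super|eapply W_super]; eauto.
  - rename axA into iA1. destruct axB as (iB1&(iB2&tB2)). destruct iA1 as (iA1&(iA2&tA2)).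
    set (rd := V (car A) (car B) (rR A) (rR B)).
    set (sd := U (car A) (car B) (car C) (rS A) (rS B)).
    exists (mkD A B rd sd).
    destruct (@build_gen T I Th5 dir A B C rd sd Htr) as (?&?&?).
    + simpl; repeat split; gen_goals.
    + intros x y _ _ H; apply U_mono with (rA := rR A) (rB := rR B); auto; apply V_U; auto.
    + eapply V_restrA; eauto.
    + eapply V_restrB; eauto.
    + eapply U_restrA; eauto.
    + eapply U_restrB; eauto.
    + intros h hA hB RA RB SA SB x y; split; [eapply V_hom|eapply U_hom]; eauto.
    + intros h hA hB RA RB SA SB x y; split; [eapply V_anti|eapply U_anti]; eauto.
    + split; [assumption|split;[assumption|split;[assumption|split]]]; unfold super_cond; intros a b Ha1 Ha2 Ha3 Ha4; simpl; [eapply V_super|eapply U_super]; eauto.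
Qed.

Theorem corollary3p2 :
  forall th : theory,
    (forall T : Type, superSAP_RS (model (T := T) th no_ops)) /\
    (forall (T I : Type) (dir : I -> bool), SAP (model (T := T) th dir)).
Proof.
  intros th; split.
  - intros T A B C Htr. destruct (build Htr) as (D&?&?&?&?&?). exists D; tauto.
  - intros T I dir A B C Htr. destruct (build Htr) as (D&?&?&?&?&?). exists D; tauto.
Qed.
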